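(* The set $\{G\in\mathcal G:\ \overline G\text{ is simple, not finitely generated and not locally finite}\}$ is comeager in $\mathcal G$.
   Context: Let $\mathbb N=\{1,2,3,\dots\}$. Equip $\mathbb N^{\mathbb N\times\mathbb N}$ with the product topology of the discrete topology on $\mathbb N$. Let $\mathcal G$ be the subspace consisting of those $A\in\mathbb N^{\mathbb N\times\mathbb N}$ that are the multiplication table of a group on the underlying set $\mathbb N$ whose identity element is $1$. For $G\in\mathcal G$, $\overline G$ denotes the group on $\mathbb N$ with multiplication table $G$. *)

(* Defs.v *)
(* Encoding convention: the underlying set N = {1,2,3,...}
   of the paper is represented by Rocq's [nat] via the bijection
   k : nat  <->  k+1 in N.  Hence a table A in N^(N x N) is a function
   [nat -> nat -> nat], and "identity element 1" becomes "identity element 0". *)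
From Stdlib Require Import List.

Definition table := nat -> nat -> nat.

(** Product topology of the discrete topology on N^(N x N):
    U is open iff membership in U is witnessed by a finite window
    (every finite set of coordinates lies in some [0,n) x [0,n)). *)
Definition agree_upto (n : nat) (A B : table) : Prop :=
  forall i j, i < n -> j < n -> A i j = B i j.

Definition is_open (U : table -> Prop) : Prop :=
  forall A, U A -> exists n, forall B, agree_upto n A B -> U B.

Definition is_group_table (A : table) : Prop :=
  (forall x y z, A (A x y) z = A x (A y z)) /\
  (forall x, A 0 x = x) /\
  (forall x, A x 0 = x) /\
  (forall x, exists y, A x y = 0 /\ A y x = 0).

Definition rel_open_in_G (D : table -> Prop) : Prop :=
  exists U, is_open U /\ forall A, is_group_table A -> (D A <-> U A).

Definition dense_in_G (D : table -> Prop) : Prop :=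
  forall U, is_open U ->
    (exists A, is_group_table A /\ U A) ->
    exists B, is_group_table B /\ U B /\ D B.

Definition comeager_in_G (P : table -> Prop) : Prop :=
  exists D : nat -> (table -> Prop),
    (forall n, rel_open_in_G (D n)) /\
    (forall n, dense_in_G (D n)) /\
    (forall A, is_group_table A -> (forall n, D n A) -> P A).

Definition subgroup (A : table) (S : nat -> Prop) : Prop :=
  S 0 /\
  (forall x y, S x -> S y -> S (A x y)) /\
  (forall x y, S x -> A x y = 0 -> S y).

Definition normal_subgroup (A : table) (S : nat -> Prop) : Prop :=
  subgroup A S /\
  (forall g h x, A g h = 0 -> S x -> S (A (A g x) h)).

Definition simple_group (A : table) : Prop :=
  (exists x, x <> 0) /\
  forall S, normal_subgroup A S ->
    (forall x, S x -> x = 0) \/ (forall x, S x).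

Definition generated (A : table) (s : list nat) (g : nat) : Prop :=
  forall S, subgroup A S -> (forall x, In x s -> S x) -> S g.

Definition finitely_generated (A : table) : Prop :=
  exists s : list nat, forall g, generated A s g.

Definition locally_finite (A : table) : Prop :=
  forall s : list nat, exists l : list nat,
    forall g, generated A s g -> In g l.

(* Main.v *)
Require Import Defs.
From Stdlib Require Import List Arith Lia ZArith Cantor.
From Stdlib Require Import ClassicalEpsilon FunctionalExtensionality ProofIrrelevance Classical PropExtensionality.
Import ListNotations.

Lemma exists_least (Q : nat -> Prop) :
  (exists n, Q n) -> exists n, Q n /\ forall m, m < n -> ~ Q m.
Proof.
  intros [n Hn]. revert Hn. induction n as [n IH] using lt_wf_ind. intros Hn.
  destruct (classic (exists m, m < n /\ Q m)) as [[m [Hm HQ]]|Hno].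
  - exact (IH m Hm HQ).
  - exists n; split; auto. intros m Hm HQ. apply Hno; eauto.
Qed.

Definition eps {X} (x0 : X) (P : X -> Prop) : X := epsilon (inhabits x0) P.
Lemma eps_spec {X} (x0:X) (P : X -> Prop) : (exists x, P x) -> P (eps x0 P).
Proof. intros H. unfold eps. apply epsilon_spec. exact H. Qed.

Definition mu_of {X} (e : nat -> X) (l : list X) : nat :=
  eps 0 (fun j => ~ In (e j) l /\ forall i, i < j -> In (e i) l).

Fixpoint Lst {X} (e : nat -> X) (k : nat) : list X :=
  match k with 0 => [] | S k' => Lst e k' ++ [e (mu_of e (Lst e k'))] end.

Definition enum {X} (e : nat -> X) (k : nat) : X := e (mu_of e (Lst e k)).

Lemma mu_spec {X} (e : nat -> X) l : (exists j, ~ In (e j) l) ->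
  ~ In (e (mu_of e l)) l /\ forall i, i < mu_of e l -> In (e i) l.
Proof.
  intros H. unfold mu_of. apply eps_spec.
  destruct (exists_least _ H) as [n [Hn Hm]]. exists n. split; auto.
  intros i Hi. apply NNPP. intro C. exact (Hm i Hi C).
Qed.

Lemma mu_unique {X} (e : nat -> X) l j : ~ In (e j) l -> (forall i, i < j -> In (e i) l) ->
  mu_of e l = j.
Proof.
  intros H1 H2. destruct (mu_spec e l (ex_intro _ j H1)) as [A B].
  destruct (lt_eq_lt_dec (mu_of e l) j) as [[h|h]|h]; auto.
  - exfalso. exact (A (H2 _ h)).
  - exfalso. exact (H1 (B _ h)).
Qed.

Lemma Lst_mono {X} (e : nat -> X) k k' : k <= k' -> incl (Lst e k) (Lst e k').
Proof.
  induction 1. apply incl_refl. simpl. intros a Ha. apply in_or_app. left. auto.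
Qed.

Lemma In_Lst_inv {X} (e : nat -> X) k x : In x (Lst e k) -> exists i, i < k /\ enum e i = x.
Proof.
  induction k; simpl. tauto.
  intros H. apply in_app_or in H. destruct H as [H|[H|[]]].
  - destruct (IHk H) as [i [Hi Hx]]. exists i. split; auto.
  - exists k. split; auto.
Qed.

Lemma enum_props {X} (P : X -> Prop) (e : nat -> X) :
  (forall n, P (e n)) -> (forall x, P x -> exists n, e n = x) ->
  (forall l : list X, exists x, P x /\ ~ In x l) ->
  (forall i j, enum e i = enum e j -> i = j) /\ (forall n, P (enum e n)) /\
  (forall x, P x -> exists n, enum e n = x).
Proof.
  intros HP Hs Hinf.
  assert (Hj : forall l, exists j, ~ In (e j) l).
  { intros l. destruct (Hinf l) as [x [Px Hx]]. destruct (Hs x Px) as [j Hj]. subst. eauto. }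
  assert (Hin : forall i k, i < k -> In (enum e i) (Lst e k)).
  { intros i k Hik. apply (Lst_mono e (S i) k); [lia|]. simpl. apply in_or_app. right. left. reflexivity. }
  assert (Hout : forall k, ~ In (enum e k) (Lst e k)).
  { intros k. apply (mu_spec e (Lst e k) (Hj _)). }
  repeat split.
  - intros i j Hij. destruct (lt_eq_lt_dec i j) as [[h|h]|h]; auto.
    + exfalso. apply (Hout j). rewrite <- Hij. auto.
    + exfalso. apply (Hout i). rewrite Hij. auto.
  - intros n. apply HP.
  - assert (Hc : forall j, In (e j) (Lst e (S j))).
    { intros j. induction j as [j IH] using lt_wf_ind.
      destruct (classic (In (e j) (Lst e j))) as [h|h].
      - apply (Lst_mono e j (S j)); auto.
      - simpl. apply in_or_app. right. left.
        rewrite (mu_unique e (Lst e j) j h); auto.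
        intros i Hi. apply (Lst_mono e (S i) j); auto. }
    intros x Px. destruct (Hs x Px) as [j Hj0]. subst x.
    destruct (In_Lst_inv e _ _ (Hc j)) as [i [_ Hi]]. eauto.
Qed.

Definition swapn (j k i : nat) : nat := if Nat.eqb i j then k else if Nat.eqb i k then j else i.

Lemma swapn_inv j k i : swapn j k (swapn j k i) = i.
Proof.
  unfold swapn. destruct (Nat.eqb_spec i j); destruct (Nat.eqb_spec i k); subst.
  all: repeat (match goal with |- context [Nat.eqb ?a ?b] => destruct (Nat.eqb_spec a b) end); subst; try lia; auto.
Qed.

Lemma fixup {X} (P : X -> Prop) (phi : nat -> X) (F : list nat) (b : nat -> X) :
  (forall i j, phi i = phi j -> i = j) -> (forall i, In i F -> P (phi i)) ->
  (forall i j, b i = b j -> i = j) -> (forall n, P (b n)) -> (forall x, P x -> exists n, b n = x) ->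
  exists b' : nat -> X, (forall i j, b' i = b' j -> i = j) /\ (forall n, P (b' n)) /\
    (forall x, P x -> exists n, b' n = x) /\ (forall i, In i F -> b' i = phi i).
Proof.
  intros Hphi HF. revert b. induction F as [|j F IH]; intros b Hi HP Hs.
  - exists b. repeat split; auto. intros i [].
  - destruct (IH (fun i H => HF i (or_intror H)) b Hi HP Hs) as [b1 [H1 [H2 [H3 H4]]]].
    destruct (classic (In j F)) as [hj|hj].
    + exists b1. repeat split; auto. intros i [<-|h]; auto.
    + destruct (H3 (phi j) (HF j (or_introl eq_refl))) as [k Hk].
      exists (fun i => b1 (swapn j k i)). repeat split.
      * intros i i' E. apply H1 in E. rewrite <- (swapn_inv j k i), <- (swapn_inv j k i'), E. auto.
      * intros n. apply H2.
      * intros x Px. destruct (H3 x Px) as [n Hn]. exists (swapn j k n). rewrite swapn_inv. auto.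
      * intros i [<-|h].
        -- unfold swapn. rewrite Nat.eqb_refl. auto.
        -- unfold swapn. destruct (Nat.eqb_spec i j). subst; contradiction.
           destruct (Nat.eqb_spec i k). subst. exfalso. apply n. apply Hphi. rewrite <- Hk. rewrite <- (H4 _ h). reflexivity.
           auto.
Qed.
Definition Om := (nat * Z * Z * Z)%type.
Record perm := mkP { pf : Om -> Om; pg : Om -> Om;
  pfg : forall w, pf (pg w) = w; pgf : forall w, pg (pf w) = w }.

Lemma perm_ext (p q : perm) : (forall w, pf p w = pf q w) -> p = q.
Proof.
  destruct p as [f g fg gf], q as [f' g' fg' gf']; simpl; intros H.
  assert (f = f') by (apply functional_extensionality; auto). subst f'.
  assert (g = g').
  { apply functional_extensionality; intros w. rewrite <- (fg' w) at 1. rewrite gf. reflexivity. }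
  subst g'. f_equal; apply proof_irrelevance.
Qed.

Definition pcomp (p q : perm) : perm.
Proof.
  refine (mkP (fun w => pf p (pf q w)) (fun w => pg q (pg p w)) _ _).
  - intros w. rewrite pfg, pfg. auto.
  - intros w. rewrite pgf, pgf. auto.
Defined.
Definition pid : perm := mkP (fun w => w) (fun w => w) (fun w => eq_refl) (fun w => eq_refl).
Definition pinv (p : perm) : perm := mkP (pg p) (pf p) (pgf p) (pfg p).

Lemma pcomp_assoc p q r : pcomp p (pcomp q r) = pcomp (pcomp p q) r.
Proof. apply perm_ext; reflexivity. Qed.
Lemma pcomp_id_l p : pcomp pid p = p.
Proof. apply perm_ext; reflexivity. Qed.
Lemma pcomp_id_r p : pcomp p pid = p.
Proof. apply perm_ext; reflexivity. Qed.
Lemma pcomp_inv_r p : pcomp p (pinv p) = pid.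
Proof. apply perm_ext; intros; simpl; apply pfg. Qed.
Lemma pcomp_inv_l p : pcomp (pinv p) p = pid.
Proof. apply perm_ext; intros; simpl; apply pgf. Qed.
Lemma pinv_inv p : pinv (pinv p) = p.
Proof. apply perm_ext; reflexivity. Qed.
Lemma pinv_comp p q : pinv (pcomp p q) = pcomp (pinv q) (pinv p).
Proof. apply perm_ext; reflexivity. Qed.

Inductive Gen (gens : nat -> perm) : perm -> Prop :=
| gen_g i : Gen gens (gens i)
| gen_id : Gen gens pid
| gen_mul p q : Gen gens p -> Gen gens q -> Gen gens (pcomp p q)
| gen_inv p : Gen gens p -> Gen gens (pinv p).

Definition sg (gens : nat -> perm) (n : nat) : perm :=
  let (i, s) := of_nat n in if Nat.eqb s 0 then gens i else pinv (gens i).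
Definition flipn (n : nat) : nat :=
  let (i, s) := of_nat n in to_nat (i, if Nat.eqb s 0 then 1 else 0).

Lemma sg_flip gens n : sg gens (flipn n) = pinv (sg gens n).
Proof.
  unfold sg, flipn. destruct (of_nat n) as [i s] eqn:E.
  rewrite cancel_of_to. destruct (Nat.eqb s 0); simpl; auto. rewrite pinv_inv; auto.
Qed.

Definition evalw gens (w : list nat) : perm := fold_right (fun a acc => pcomp (sg gens a) acc) pid w.

Lemma evalw_app gens w1 w2 : evalw gens (w1 ++ w2) = pcomp (evalw gens w1) (evalw gens w2).
Proof.
  induction w1; simpl. rewrite pcomp_id_l; auto. rewrite IHw1, pcomp_assoc. auto.
Qed.

Lemma evalw_inv gens w : evalw gens (rev (map flipn w)) = pinv (evalw gens w).
Proof.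
  induction w; simpl. apply perm_ext; reflexivity.
  rewrite evalw_app, IHw. simpl. rewrite sg_flip, pcomp_id_r, pinv_comp. auto.
Qed.

Lemma evalw_Gen gens w : Gen gens (evalw gens w).
Proof.
  induction w; simpl. constructor. constructor; auto. unfold sg. destruct (of_nat a).
  destruct (Nat.eqb n0 0); repeat constructor.
Qed.

Lemma Gen_evalw gens p : Gen gens p -> exists w, evalw gens w = p.
Proof.
  induction 1.
  - exists [to_nat (i, 0)]. unfold evalw, fold_right, sg. rewrite cancel_of_to. simpl. apply pcomp_id_r.
  - exists []. reflexivity.
  - destruct IHGen1 as [w1 <-], IHGen2 as [w2 <-]. exists (w1 ++ w2). apply evalw_app.
  - destruct IHGen as [w <-]. exists (rev (map flipn w)). apply evalw_inv.
Qed.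

Fixpoint codel (l : list nat) : nat :=
  match l with [] => 0 | a :: l' => S (to_nat (a, codel l')) end.
Fixpoint decf (f n : nat) : list nat :=
  match f with 0 => [] | S f' => match n with 0 => [] | S n' =>
    let (a, c) := of_nat n' in a :: decf f' c end end.
Definition decl (n : nat) : list nat := decf n n.

Lemma decf_code l f : codel l <= f -> decf f (codel l) = l.
Proof.
  revert f; induction l; intros f Hf.
  - destruct f; reflexivity.
  - destruct f. simpl in Hf. lia. 
    change (decf (S f) (codel (a :: l))) with (let (a0, c) := of_nat (to_nat (a, codel l)) in a0 :: decf f c).
    rewrite cancel_of_to. f_equal. apply IHl.
    simpl in Hf. pose proof (to_nat_non_decreasing a (codel l)). lia.
Qed.

Lemma decl_surj l : exists n, decl n = l.
Proof. exists (codel l). unfold decl. apply decf_code. lia. Qed.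

Lemma NoDup_map_inj {A B} (f : A -> B) l : (forall x y, f x = f y -> x = y) -> NoDup l -> NoDup (map f l).
Proof.
  intros Hf. induction 1; simpl; constructor; auto.
  intros Hin. apply in_map_iff in Hin. destruct Hin as [y [E Hy]]. apply Hf in E. subst. auto.
Qed.

Definition gensOf (phi : nat -> perm) (E : list perm) (n : nat) : perm :=
  let (a, c) := of_nat n in if Nat.eqb c 0 then phi a else nth (pred c) E pid.

Lemma Gen_phi phi E a : Gen (gensOf phi E) (phi a).
Proof.
  replace (phi a) with (gensOf phi E (to_nat (a, 0))). constructor.
  unfold gensOf. rewrite cancel_of_to. reflexivity.
Qed.

Lemma Gen_E phi E p : In p E -> Gen (gensOf phi E) p.
Proof.
  intros H. destruct (In_nth E p pid H) as [k [_ Hk]].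
  replace p with (gensOf phi E (to_nat (0, S k))). constructor.
  unfold gensOf. rewrite cancel_of_to. simpl. auto.
Qed.

Lemma realize (A0 : table) (phi : nat -> perm) (E : list perm) (n : nat) (Fx : list nat) :
  (forall i j, phi (A0 i j) = pcomp (phi i) (phi j)) -> (forall i j, phi i = phi j -> i = j) ->
  phi 0 = pid ->
  exists (B : table) (beta : nat -> perm),
   is_group_table B /\ agree_upto n A0 B /\
   (forall i j, beta (B i j) = pcomp (beta i) (beta j)) /\
   (forall i j, beta i = beta j -> i = j) /\
   (forall p, Gen (gensOf phi E) p -> exists i, beta i = p) /\
   (forall i, Gen (gensOf phi E) (beta i)) /\
   (forall i, In i Fx -> beta i = phi i).
Proof.
  intros Hhom Hinj H0.
  set (P := Gen (gensOf phi E)).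
  set (e := fun k => evalw (gensOf phi E) (decl k)).
  assert (He1 : forall k, P (e k)) by (intros; apply evalw_Gen).
  assert (He2 : forall x, P x -> exists k, e k = x).
  { intros x Hx. destruct (Gen_evalw _ _ Hx) as [w Hw]. destruct (decl_surj w) as [k Hk].
    exists k. unfold e. rewrite Hk. auto. }
  assert (Hinf : forall l : list perm, exists x, P x /\ ~ In x l).
  { intros l. apply NNPP. intros C.
    assert (Hall : forall k, In (phi k) l).
    { intros k. apply NNPP. intros C2. apply C. exists (phi k). split; auto. apply Gen_phi. }
    assert (Hl : length (map phi (seq 0 (S (length l)))) <= length l).
    { apply NoDup_incl_length. apply NoDup_map_inj; auto. apply seq_NoDup.
      intros x Hx. apply in_map_iff in Hx. destruct Hx as [k [<- _]]. auto. }
    rewrite length_map, length_seq in Hl. lia. }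
  destruct (enum_props P e He1 He2 Hinf) as [Hb1 [Hb2 Hb3]].
  set (F' := 0 :: Fx ++ seq 0 n ++ flat_map (fun i => map (A0 i) (seq 0 n)) (seq 0 n)).
  destruct (fixup P phi F' (enum e) Hinj (fun i _ => Gen_phi phi E i) Hb1 Hb2 Hb3)
    as [beta [Hi [HP [Hs HF]]]].
  set (B := fun i j => eps 0 (fun k => beta k = pcomp (beta i) (beta j))).
  assert (HB : forall i j, beta (B i j) = pcomp (beta i) (beta j)).
  { intros i j. unfold B. apply (eps_spec 0 (fun k => beta k = pcomp (beta i) (beta j))).
    apply Hs. constructor; apply HP. }
  assert (Hb0 : beta 0 = pid). { rewrite HF. auto. left; auto. }
  exists B, beta. repeat split; auto.
  - intros x y z. apply Hi. rewrite !HB. symmetry. apply pcomp_assoc.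
  - intros x. apply Hi. rewrite HB, Hb0. apply pcomp_id_l.
  - intros x. apply Hi. rewrite HB, Hb0. apply pcomp_id_r.
  - intros x. destruct (Hs (pinv (beta x))) as [y Hy]. constructor; apply HP.
    exists y. split; apply Hi; rewrite HB, Hb0, Hy. apply pcomp_inv_r. apply pcomp_inv_l.
  - intros i j Hi' Hj'. apply Hi. rewrite HB.
    assert (Hin : forall k, k < n -> In k F').
    { intros k Hk. right. apply in_or_app. right. apply in_or_app. left. apply in_seq. lia. }
    rewrite (HF i (Hin i Hi')), (HF j (Hin j Hj')), <- Hhom. apply HF.
    right. apply in_or_app. right. apply in_or_app. right. apply in_flat_map.
    exists i. split. apply in_seq; lia. apply in_map. apply in_seq; lia.
  - intros i Hin. apply HF. right. apply in_or_app. left. auto.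
Qed.
Definition ginv (A : table) (x : nat) : nat := eps 0 (fun y => A x y = 0 /\ A y x = 0).

Lemma ginv_spec A x : is_group_table A -> A x (ginv A x) = 0 /\ A (ginv A x) x = 0.
Proof. intros [_ [_ [_ H]]]. unfold ginv. apply (eps_spec 0 (fun y => A x y = 0 /\ A y x = 0)). apply H. Qed.

Lemma gassoc A x y z : is_group_table A -> A (A x y) z = A x (A y z).
Proof. intros [H _]. apply H. Qed.
Lemma gidl A x : is_group_table A -> A 0 x = x.
Proof. intros [_ [H _]]. apply H. Qed.
Lemma gidr A x : is_group_table A -> A x 0 = x.
Proof. intros [_ [_ [H _]]]. apply H. Qed.

Lemma gcancel_l A a b c : is_group_table A -> A a b = A a c -> b = c.
Proof.
  intros HA H. destruct (ginv_spec A a HA) as [H1 H2].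
  rewrite <- (gidl A b HA), <- (gidl A c HA), <- H2, !gassoc, H; auto.
Qed.
Lemma gcancel_r A a b c : is_group_table A -> A b a = A c a -> b = c.
Proof.
  intros HA H. destruct (ginv_spec A a HA) as [H1 H2].
  rewrite <- (gidr A b HA), <- (gidr A c HA), <- H1, <- !gassoc, H; auto.
Qed.
Lemma inv_sym A x y : is_group_table A -> A x y = 0 -> A y x = 0.
Proof.
  intros HA H. apply (gcancel_l A x); auto. rewrite <- gassoc, H, gidl, gidr; auto.
Qed.
Lemma inv_unique A x y : is_group_table A -> A x y = 0 -> y = ginv A x.
Proof.
  intros HA H. apply (gcancel_l A x); auto. rewrite H. symmetry. apply ginv_spec; auto.
Qed.

Fixpoint pow (A : table) (a : nat) (k : nat) : nat :=
  match k with 0 => 0 | S k' => A a (pow A a k') end.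

Lemma pow_add A a i j : is_group_table A -> pow A a (i + j) = A (pow A a i) (pow A a j).
Proof.
  intros HA. induction i; simpl. rewrite gidl; auto. rewrite IHi, gassoc; auto.
Qed.
Lemma pow_mul A a i j : is_group_table A -> pow A a (i * j) = pow A (pow A a i) j.
Proof.
  intros HA. induction j; simpl. rewrite Nat.mul_0_r; auto.
  rewrite Nat.mul_succ_r, Nat.add_comm, pow_add, IHj; auto.
Qed.
Lemma pow_comm A a i j : is_group_table A -> A (pow A a i) (pow A a j) = A (pow A a j) (pow A a i).
Proof. intros HA. rewrite <- !pow_add; auto. rewrite Nat.add_comm; auto. Qed.
Lemma pow_1 A a : is_group_table A -> pow A a 1 = a.
Proof. intros HA. simpl. apply gidr; auto. Qed.

Definition zp (A : table) (a : nat) (n : Z) : nat :=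
  if (0 <=? n)%Z then pow A a (Z.to_nat n) else pow A (ginv A a) (Z.to_nat (- n)).

Lemma zp_succ A a n : is_group_table A -> zp A a (n + 1) = A a (zp A a n).
Proof.
  intros HA. unfold zp. destruct (Z.leb_spec 0 n); destruct (Z.leb_spec 0 (n+1)); try lia.
  - replace (Z.to_nat (n+1)) with (S (Z.to_nat n)) by lia. reflexivity.
  - destruct (Z.eq_dec (n+1) 0).
    + replace (n+1)%Z with 0%Z by lia. replace (Z.to_nat (-n)) with 1 by lia. simpl.
      rewrite gidr; auto. symmetry. apply ginv_spec; auto.
    + lia.
  - replace (Z.to_nat (-n)) with (S (Z.to_nat (-(n+1)))) by lia. simpl.
    rewrite <- gassoc, (proj1 (ginv_spec A a HA)), gidl; auto.
Qed.

Lemma zp_pred A a n : is_group_table A -> zp A a (n - 1) = A (ginv A a) (zp A a n).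
Proof.
  intros HA. replace n with (n - 1 + 1)%Z at 2 by lia. rewrite zp_succ, <- gassoc; auto.
  rewrite (proj2 (ginv_spec A a HA)), gidl; auto.
Qed.

Lemma zp_0 A a : zp A a 0 = 0.
Proof. reflexivity. Qed.

Lemma zp_add A a n m : is_group_table A -> zp A a (n + m) = A (zp A a n) (zp A a m).
Proof.
  intros HA. induction n using Z.peano_ind.
  - simpl. rewrite gidl; auto.
  - replace (Z.succ n + m)%Z with (n + m + 1)%Z by lia. replace (Z.succ n) with (n + 1)%Z by lia.
    rewrite !zp_succ, IHn; auto. symmetry. apply gassoc; auto.
  - replace (Z.pred n + m)%Z with (n + m - 1)%Z by lia. replace (Z.pred n) with (n - 1)%Z by lia.
    rewrite !zp_pred, IHn; auto. symmetry. apply gassoc; auto.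
Qed.

Lemma zp_1 A a : is_group_table A -> zp A a 1 = a.
Proof. intros HA. unfold zp. simpl. apply gidr; auto. Qed.

Lemma zp_nat A a k : zp A a (Z.of_nat k) = pow A a k.
Proof. unfold zp. destruct (Z.leb_spec 0 (Z.of_nat k)); try lia. rewrite Nat2Z.id; auto. Qed.

Lemma zp_opp A a n : is_group_table A -> A (zp A a (- n)) (zp A a n) = 0.
Proof. intros HA. rewrite <- zp_add; auto. replace (-n + n)%Z with 0%Z by lia. auto. Qed.

Lemma zp_comm A a n : is_group_table A -> A (zp A a n) a = A a (zp A a n).
Proof.
  intros HA. pose proof (zp_add A a n 1 HA) as H1. pose proof (zp_add A a 1 n HA) as H2.
  rewrite zp_1 in H1, H2; auto. rewrite <- H1, <- H2, Z.add_comm. auto.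
Qed.

Definition rhof (A : table) (a : nat) (w : Om) : Om :=
  match w with (b, l, z, k) => (A a b, l, z, k) end.

Definition rho (A : table) (HA : is_group_table A) (a : nat) : perm.
Proof.
  refine (mkP (rhof A a) (rhof A (ginv A a)) _ _); intros [[[b l] z] k]; simpl;
  rewrite <- gassoc; auto; f_equal; f_equal; f_equal.
  - rewrite (proj1 (ginv_spec A a HA)). apply gidl; auto.
  - rewrite (proj2 (ginv_spec A a HA)). apply gidl; auto.
Defined.

Lemma rho_hom A HA a b : rho A HA (A a b) = pcomp (rho A HA a) (rho A HA b).
Proof. apply perm_ext. intros [[[c l] z] k]. simpl. rewrite gassoc; auto. Qed.
Lemma rho_inj A HA a b : rho A HA a = rho A HA b -> a = b.
Proof.
  intros H. assert (H' := f_equal (fun p => pf p (0, 0%Z, 0%Z, 0%Z)) H). simpl in H'.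
  rewrite !gidr in H'; auto. congruence.
Qed.
Lemma rho_0 A HA : rho A HA 0 = pid.
Proof. apply perm_ext. intros [[[c l] z] k]. simpl. rewrite gidl; auto. Qed.
Lemma rho_pf A HA a b l z k : pf (rho A HA a) (b, l, z, k) = (A a b, l, z, k).
Proof. reflexivity. Qed.
Definition NFc (s : list nat) (A : table) : Prop :=
  exists g h, (forall a, In a s -> A g a = A a g /\ A h a = A a h) /\ A g h <> A h g.

Definition BSc (A : table) : Prop :=
  exists a t t', A t t' = 0 /\ A t' t = 0 /\ A (A t (A a a)) t' = A a (A a a) /\
    A (A (A t a) t') a <> A a (A (A t a) t').

Inductive NC (A : table) (x : nat) : nat -> Prop :=
| nc_base : NC A x x
| nc_one : NC A x 0
| nc_mul a b : NC A x a -> NC A x b -> NC A x (A a b)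
| nc_inv a a' : NC A x a -> A a a' = 0 -> NC A x a'
| nc_conj a g g' : NC A x a -> A g g' = 0 -> NC A x (A (A g a) g').

Definition SMc (x y : nat) (A : table) : Prop := x = 0 \/ NC A x y.

Lemma agree_at n A B i j : agree_upto n A B -> i < n -> j < n -> B i j = A i j.
Proof. intros H Hi Hj. symmetry. apply H; auto. Qed.

Fixpoint lsum (l : list nat) : nat := match l with [] => 0 | a :: l' => a + lsum l' end.
Lemma In_lsum a l : In a l -> a <= lsum l.
Proof. induction l; simpl; [tauto|]. intros [->|H]; [lia|]. specialize (IHl H). lia. Qed.

Lemma NFc_open s : is_open (NFc s).
Proof.
  intros A [g [h [H1 H2]]]. exists (S (g + h + lsum s)). intros B HB.
  exists g, h. split.
  - intros a Ha. pose proof (In_lsum _ _ Ha). destruct (H1 a Ha).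
    rewrite !(agree_at _ _ _ _ _ HB) by lia. auto.
  - rewrite !(agree_at _ _ _ _ _ HB) by lia. auto.
Qed.

Lemma BSc_open : is_open BSc.
Proof.
  intros A [a [t [t' [H1 [H2 [H3 H4]]]]]].
  exists (S (a + t + t' + A a a + A t (A a a) + A t a + A (A t a) t')). intros B HB.
  exists a, t, t'.
  assert (E : forall i j, i < S (a + t + t' + A a a + A t (A a a) + A t a + A (A t a) t') ->
     j < S (a + t + t' + A a a + A t (A a a) + A t a + A (A t a) t') -> B i j = A i j)
    by (intros; apply (agree_at _ _ _ _ _ HB); auto).
  rewrite (E t t'), (E t' t), (E a a), (E t (A a a)), (E (A t (A a a)) t'), (E a (A a a)),
    (E t a), (E (A t a) t'), (E (A (A t a) t') a), (E a (A (A t a) t')); try lia.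
Qed.

Lemma NC_open A x y : NC A x y -> exists n, forall B, agree_upto n A B -> NC B x y.
Proof.
  induction 1.
  - exists 0. intros. constructor.
  - exists 0. intros. constructor.
  - destruct IHNC1 as [n1 H1], IHNC2 as [n2 H2]. exists (S (n1 + n2 + a + b)). intros B HB.
    rewrite <- (agree_at _ _ _ a b HB) by lia. constructor.
    apply H1. intros i j ? ?. apply HB; lia. apply H2. intros i j ? ?. apply HB; lia.
  - destruct IHNC as [n1 H1]. exists (S (n1 + a + a')). intros B HB.
    apply (nc_inv B x a). apply H1. intros i j ? ?. apply HB; lia.
    rewrite (agree_at _ _ _ a a' HB) by lia. auto.
  - destruct IHNC as [n1 H1]. exists (S (n1 + a + g + g' + A g a)). intros B HB.
    rewrite <- (agree_at _ _ _ (A g a) g' HB) by lia. rewrite <- (agree_at _ _ _ g a HB) by lia.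
    apply nc_conj. apply H1. intros i j ? ?. apply HB; lia.
    rewrite (agree_at _ _ _ g g' HB) by lia. auto.
Qed.

Lemma SMc_open x y : is_open (SMc x y).
Proof.
  intros A [H|H]. exists 0. intros. left. auto.
  destruct (NC_open A x y H) as [n Hn]. exists n. intros. right. auto.
Qed.

Lemma NF_impl s A : is_group_table A -> NFc s A -> ~ (forall q, generated A s q).
Proof.
  intros HA [g [h [H1 H2]]] Hg. apply H2.
  set (S := fun z => A g z = A z g).
  assert (HS : subgroup A S).
  { unfold S. repeat split.
    - rewrite gidl, gidr; auto.
    - intros z w Hz Hw. rewrite <- gassoc, Hz, gassoc, Hw, gassoc; auto.
    - intros z w Hz Hzw. apply (gcancel_l A z); auto.
      rewrite <- !gassoc; auto. rewrite <- Hz. rewrite (gassoc A g z w), Hzw, gidr, gidl; auto. }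
  apply (Hg h S HS). intros a Ha. apply H1; auto.
Qed.

Lemma gen_pow A a s k : In a s -> generated A s (pow A a k).
Proof.
  intros Ha S [H0 [Hm _]] Hs. induction k; simpl; auto.
Qed.

Definition cj (A : table) (t t' w : nat) := A (A t w) t'.

Lemma cj_hom A t t' u v : is_group_table A -> A t' t = 0 -> cj A t t' (A u v) = A (cj A t t' u) (cj A t t' v).
Proof.
  intros HA H. unfold cj. rewrite !gassoc; auto. f_equal. f_equal.
  rewrite <- (gassoc A t' t), H, gidl; auto.
Qed.
Lemma cj_pow A t t' w k : is_group_table A -> A t t' = 0 -> A t' t = 0 ->
  cj A t t' (pow A w k) = pow A (cj A t t' w) k.
Proof.
  intros HA H1 H2. induction k; simpl.
  - unfold cj. rewrite gidr; auto.
  - rewrite cj_hom, IHk; auto.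
Qed.

Lemma BS_impl A : is_group_table A -> BSc A -> ~ locally_finite A.
Proof.
  intros HA [a [t [t' [H1 [H2 [H3 H4]]]]]] HLF.
  destruct (HLF [a]) as [l Hl].
  assert (Hall : forall k, In (pow A a k) l) by (intros; apply Hl, gen_pow; left; auto).
  assert (Hrep : exists i j, i < j /\ pow A a i = pow A a j).
  { apply NNPP. intros C.
    assert (Hinj : forall i j, pow A a i = pow A a j -> i = j).
    { intros i j E. destruct (lt_eq_lt_dec i j) as [[h|h]|h]; auto; exfalso; apply C; eauto. }
    assert (Hl2 : length (map (pow A a) (seq 0 (S (length l)))) <= length l).
    { apply NoDup_incl_length. apply NoDup_map_inj; auto. apply seq_NoDup.
      intros x Hx. apply in_map_iff in Hx. destruct Hx as [k [<- _]]. auto. }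
    rewrite length_map, length_seq in Hl2. lia. }
  destruct Hrep as [i [j [Hij Eij]]].
  assert (Hex : exists m, 1 <= m /\ pow A a m = 0).
  { exists (j - i). split. lia. apply (gcancel_l A (pow A a i)); auto.
    rewrite <- pow_add, gidr; auto. replace (i + (j - i)) with j by lia. auto. }
  destruct (exists_least _ Hex) as [m [[Hm1 Hm2] Hmin]].
  assert (Hc2 : cj A t t' (pow A a 2) = pow A a 3).
  { simpl. rewrite !gidr; auto. }
  assert (Hc2k : forall k, cj A t t' (pow A a (2 * k)) = pow A a (3 * k)).
  { intros k. rewrite !pow_mul, cj_pow, Hc2; auto. }
  destruct (Nat.Even_or_Odd m) as [[p Hp]|[p Hp]].
  - apply (Hmin p). lia. split. lia.
    assert (E : pow A a (3 * p) = 0).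
    { rewrite <- Hc2k, <- Hp, Hm2. unfold cj. rewrite gidr; auto. }
    replace (3 * p) with (2 * p + p) in E by lia. rewrite pow_add, <- Hp, Hm2, gidl in E; auto.
  - apply H4. fold (cj A t t' a).
    assert (Ea : a = pow A a (2 * (p + 1))).
    { replace (2 * (p + 1)) with (m + 1) by lia. rewrite pow_add, Hm2, gidl, pow_1; auto. }
    assert (Eb : cj A t t' a = pow A a (3 * (p + 1))).
    { rewrite <- Hc2k. rewrite <- Ea. auto. }
    rewrite Eb. pose proof (pow_comm A a (3 * (p + 1)) 1 HA) as Hpc. rewrite pow_1 in Hpc; auto.
Qed.

Lemma SM_impl A : is_group_table A -> (forall x y, SMc x y A) -> simple_group A.
Proof.
  intros HA H. split. exists 1. auto.
  intros S [[HS0 [HSm HSi]] HSn].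
  destruct (classic (exists x, S x /\ x <> 0)) as [[x [Sx Hx]]|C].
  - right. intros y. destruct (H x y) as [E|Hnc]. contradiction.
    induction Hnc; eauto.
  - left. intros x Sx. apply NNPP. intros Hx. apply C. eauto.
Qed.
Lemma dense_of (D : table -> Prop) :
  (forall A0 n, is_group_table A0 -> exists B, is_group_table B /\ agree_upto n A0 B /\ D B) ->
  dense_in_G D.
Proof.
  intros H U HU [A0 [HA0 HU0]]. destruct (HU A0 HU0) as [n Hn].
  destruct (H A0 n HA0) as [B [HB [Hag HD]]]. exists B. auto.
Qed.

Definition swapZ (i j k : Z) : Z := if Z.eqb k i then j else if Z.eqb k j then i else k.
Lemma swapZ_inv i j k : swapZ i j (swapZ i j k) = k.
Proof.
  unfold swapZ. destruct (Z.eqb_spec k i); destruct (Z.eqb_spec k j); subst.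
  all: repeat (match goal with |- context [Z.eqb ?a ?b] => destruct (Z.eqb_spec a b) end); subst; try lia; auto.
Qed.
Definition swf (i j : Z) (w : Om) : Om := match w with (b, l, z, k) => (b, l, z, swapZ i j k) end.
Definition swp (i j : Z) : perm.
Proof. refine (mkP (swf i j) (swf i j) _ _); intros [[[b l] z] k]; simpl; rewrite swapZ_inv; auto. Defined.

Lemma NF_dense s : dense_in_G (NFc s).
Proof.
  apply dense_of. intros A0 n HA.
  destruct (realize A0 (rho A0 HA) [swp 0 1; swp 1 2] n (0 :: s) (rho_hom A0 HA) (rho_inj A0 HA) (rho_0 A0 HA))
    as [B [beta [HB [Hag [Hhom [Hinj [Hs [HG HF]]]]]]]].
  exists B. split; [auto|split; [auto|]].
  assert (G1 : Gen (gensOf (rho A0 HA) [swp 0 1; swp 1 2]) (swp 0 1)) by (apply Gen_E; simpl; auto).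
  assert (G2 : Gen (gensOf (rho A0 HA) [swp 0 1; swp 1 2]) (swp 1 2)) by (apply Gen_E; simpl; auto).
  destruct (Hs _ G1) as [lg Hlg]. destruct (Hs _ G2) as [lh Hlh].
  exists lg, lh. split.
  - intros a Ha. split; apply Hinj; rewrite !Hhom, ?Hlg, ?Hlh, HF by (right; auto);
      apply perm_ext; intros [[[b l] z] k]; reflexivity.
  - intros E. apply (f_equal beta) in E. rewrite !Hhom, Hlg, Hlh in E.
    apply (f_equal (fun p => pf p (0, 0%Z, 0%Z, 0%Z))) in E. simpl in E. discriminate.
Qed.

(* Baumslag-Solitar-type permutations *)
Definition alf (w : Om) : Om := match w with (b, l, z, k) => (b, l, (z + 1)%Z, k) end.
Definition alg (w : Om) : Om := match w with (b, l, z, k) => (b, l, (z - 1)%Z, k) end.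
Definition alp : perm.
Proof. refine (mkP alf alg _ _); intros [[[b l] z] k]; simpl; repeat f_equal; lia. Defined.

Definition Tf (w : Om) : Om := match w with (b, l, z, k) =>
  (b, l, (3 * (z / 2) + (2 * k + z mod 2) mod 3)%Z, ((2 * k + z mod 2) / 3)%Z) end.
Definition Tg (w : Om) : Om := match w with (b, l, z, k) =>
  (b, l, (2 * (z / 3) + (3 * k + z mod 3) mod 2)%Z, ((3 * k + z mod 3) / 2)%Z) end.
Definition Tp : perm.
Proof.
  refine (mkP Tf Tg _ _); intros [[[b l] z] k]; unfold Tf, Tg; cbn beta iota zeta; (apply (f_equal2 pair); [apply (f_equal2 pair); [reflexivity|]|]); Z.div_mod_to_equations; lia.
Defined.

Lemma BS_dense : dense_in_G BSc.
Proof.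
  apply dense_of. intros A0 n HA.
  destruct (realize A0 (rho A0 HA) [alp; Tp] n [0] (rho_hom A0 HA) (rho_inj A0 HA) (rho_0 A0 HA))
    as [B [beta [HB [Hag [Hhom [Hinj [Hs [HG HF]]]]]]]].
  exists B. split; [auto|split; [auto|]].
  assert (Hb0 : beta 0 = pid). { rewrite HF. apply rho_0. left; auto. }
  assert (G1 : Gen (gensOf (rho A0 HA) [alp; Tp]) alp) by (apply Gen_E; simpl; auto).
  assert (G2 : Gen (gensOf (rho A0 HA) [alp; Tp]) Tp) by (apply Gen_E; simpl; auto).
  destruct (Hs _ G1) as [la Hla]. destruct (Hs _ G2) as [lt Hlt].
  destruct (Hs _ (gen_inv _ _ G2)) as [lt' Hlt'].
  exists la, lt, lt'. repeat split.
  - apply Hinj. rewrite Hhom, Hlt, Hlt', Hb0. apply pcomp_inv_r.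
  - apply Hinj. rewrite Hhom, Hlt, Hlt', Hb0. apply pcomp_inv_l.
  - apply Hinj. rewrite !Hhom, Hlt, Hlt', Hla. apply perm_ext. intros [[[b l] z] k].
    cbn [pf pcomp pinv Tp alp pg]. unfold Tf, Tg, alf; cbn beta iota zeta. (apply (f_equal2 pair); [apply (f_equal2 pair); [reflexivity|]|]); Z.div_mod_to_equations; lia.
  - intros E. apply (f_equal beta) in E. rewrite !Hhom, Hlt, Hlt', Hla in E.
    apply (f_equal (fun p => pf p (0, 0%Z, 0%Z, 0%Z))) in E. vm_compute in E. discriminate.
Qed.
Ltac tup := repeat (apply (f_equal2 pair)); try reflexivity.
Inductive NCY (gens : nat -> perm) (u : perm) : perm -> Prop :=
| ncy_base : NCY gens u u
| ncy_id : NCY gens u pid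
| ncy_mul p q : NCY gens u p -> NCY gens u q -> NCY gens u (pcomp p q)
| ncy_inv p : NCY gens u p -> NCY gens u (pinv p)
| ncy_conj p g : NCY gens u p -> Gen gens g -> NCY gens u (pcomp g (pcomp p (pinv g))).

Lemma NCY_Gen gens u p : Gen gens u -> NCY gens u p -> Gen gens p.
Proof. intros Hu. induction 1; repeat constructor; auto. Qed.

Lemma NCY_transfer gens u p (B : table) beta xl :
  (forall i j, beta (B i j) = pcomp (beta i) (beta j)) -> (forall i j, beta i = beta j -> i = j) ->
  (forall q, Gen gens q -> exists i, beta i = q) -> beta 0 = pid -> beta xl = u -> Gen gens u ->
  NCY gens u p -> forall i, beta i = p -> NC B xl i.
Proof.
  intros Hhom Hinj Hs H0 Hx Hu. induction 1; intros i Hi.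
  - rewrite <- Hx in Hi. apply Hinj in Hi. subst. constructor.
  - rewrite <- H0 in Hi. apply Hinj in Hi. subst. constructor.
  - destruct (Hs p (NCY_Gen _ _ _ Hu H)) as [i1 K1]. destruct (Hs q (NCY_Gen _ _ _ Hu H1)) as [i2 K2].
    assert (i = B i1 i2) by (apply Hinj; rewrite Hhom, K1, K2; auto). subst i. constructor; auto.
  - destruct (Hs p (NCY_Gen _ _ _ Hu H)) as [i1 K1].
    apply (nc_inv B xl i1); auto. apply Hinj. rewrite Hhom, K1, Hi, H0. apply pcomp_inv_r.
  - destruct (Hs p (NCY_Gen _ _ _ Hu H)) as [ip Hp]. destruct (Hs g H1) as [ig Hg].
    destruct (Hs (pinv g) (gen_inv _ _ H1)) as [ig' Hg'].
    assert (i = B (B ig ip) ig') by (apply Hinj; rewrite !Hhom, Hp, Hg, Hg', Hi; apply pcomp_assoc).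
    subst i. apply nc_conj; auto. apply Hinj. rewrite Hhom, Hg, Hg', H0. apply pcomp_inv_r.
Qed.

Lemma Gen_mono phi E E2 p : Gen (gensOf phi E) p -> Gen (gensOf phi (E ++ E2)) p.
Proof.
  induction 1; try (constructor; auto; fail).
  unfold gensOf at 2. destruct (of_nat i) as [a c] eqn:Ei. destruct (Nat.eqb c 0).
  - apply Gen_phi.
  - destruct (Nat.lt_ge_cases (pred c) (length E)).
    + apply Gen_E. apply in_or_app. left. apply nth_In. auto.
    + rewrite nth_overflow by auto. constructor.
Qed.

Lemma NCY_mono phi E E2 u p : NCY (gensOf phi E) u p -> NCY (gensOf phi (E ++ E2)) u p.
Proof. induction 1; try (constructor; auto; fail). apply ncy_conj; auto. apply Gen_mono; auto. Qed.

Definition Ddf (d : nat -> Z) (w : Om) : Om := match w with (b, l, z, k) => (b, (l + d b)%Z, z, k) end.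
Definition Dd (d : nat -> Z) : perm.
Proof.
  refine (mkP (Ddf d) (Ddf (fun b => - d b)%Z) _ _); intros [[[b l] z] k]; simpl; tup; lia.
Defined.
Lemma Dd_comp d1 d2 : pcomp (Dd d1) (Dd d2) = Dd (fun b => d1 b + d2 b)%Z.
Proof. apply perm_ext. intros [[[b l] z] k]. simpl. tup. lia. Qed.
Lemma Dd_ext d1 d2 : (forall b, d1 b = d2 b) -> Dd d1 = Dd d2.
Proof. intros H. apply perm_ext. intros [[[b l] z] k]. simpl. rewrite H. auto. Qed.
Lemma Dd_0 : Dd (fun _ => 0%Z) = pid.
Proof. apply perm_ext. intros [[[b l] z] k]. simpl. tup. lia. Qed.

Definition kapf (s : nat -> bool) (w : Om) : Om :=
  match w with (b, l, z, k) => (b, (if s b then - l else l)%Z, z, k) end.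
Definition kap (s : nat -> bool) : perm.
Proof.
  refine (mkP (kapf s) (kapf s) _ _); intros [[[b l] z] k]; simpl; destruct (s b); tup; lia.
Defined.
Lemma kap_conj s d : pcomp (kap s) (pcomp (Dd d) (pinv (kap s))) = Dd (fun b => if s b then - d b else d b)%Z.
Proof. apply perm_ext. intros [[[b l] z] k]. simpl. destruct (s b); tup; lia. Qed.

Lemma comm_formula A HA x h :
  pcomp (pcomp (Dd h) (pcomp (rho A HA x) (pinv (Dd h)))) (pinv (rho A HA x)) =
  Dd (fun b => h b - h (A (ginv A x) b))%Z.
Proof.
  apply perm_ext. intros [[[b l] z] k]. simpl.
  assert (E : A x (A (ginv A x) b) = b).
  { rewrite <- gassoc, (proj1 (ginv_spec A x HA)), gidl; auto. }
  rewrite E. tup. lia.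
Qed.

Lemma rho_conj A HA c d :
  pcomp (pinv (rho A HA c)) (pcomp (Dd d) (pinv (pinv (rho A HA c)))) = Dd (fun b => d (A c b)).
Proof.
  apply perm_ext. intros [[[b l] z] k]. simpl.
  rewrite <- gassoc, (proj2 (ginv_spec A c HA)), gidl; auto.
Qed.

Definition qf (A : table) (y : nat) (w : Om) : Om :=
  match w with (b, l, z, k) => (A (zp A y (l / 2)) b, l, z, k) end.
Definition qg (A : table) (y : nat) (w : Om) : Om :=
  match w with (b, l, z, k) => (A (zp A y (- (l / 2))) b, l, z, k) end.
Definition qp (A : table) (HA : is_group_table A) (y : nat) : perm.
Proof.
  refine (mkP (qf A y) (qg A y) _ _); intros [[[b l] z] k]; simpl; tup;
  rewrite <- gassoc, <- zp_add; auto.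
  - replace (l / 2 + - (l / 2))%Z with 0%Z by lia. apply gidl; auto.
  - replace (- (l / 2) + l / 2)%Z with 0%Z by lia. apply gidl; auto.
Defined.

Lemma final_formula A HA y :
  pcomp (pcomp (qp A HA y) (pcomp (Dd (fun _ => 2%Z)) (pinv (qp A HA y)))) (pinv (Dd (fun _ => 2%Z)))
  = rho A HA y.
Proof.
  apply perm_ext. intros [[[b l] z] k]. simpl.
  assert (Hl : (l + -2 + 2 = l)%Z) by lia. rewrite Hl.
  rewrite <- gassoc, <- zp_add; auto.
  replace (l / 2 + - ((l + -2) / 2))%Z with 1%Z by (Z.div_mod_to_equations; lia).
  rewrite zp_1; auto.
Qed.
Definition orb (A : table) (x b : nat) : nat -> Prop := fun c => exists n : Z, c = A (zp A x n) b.
Definition rr (A : table) (x b : nat) : nat := eps 0 (orb A x b).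
Definition ii (A : table) (x b : nat) : Z := eps 0%Z (fun n => A (zp A x n) (rr A x b) = b).

Lemma orb_x A x b : is_group_table A -> orb A x (A x b) = orb A x b.
Proof.
  intros HA. apply functional_extensionality. intros c. apply propositional_extensionality.
  unfold orb. split; intros [n Hn].
  - exists (n + 1)%Z. rewrite Hn, <- gassoc, zp_comm, <- zp_succ; auto.
  - exists (n - 1)%Z. rewrite Hn, <- gassoc, zp_comm, <- zp_succ; auto.
    replace (n - 1 + 1)%Z with n by lia. auto.
Qed.

Lemma rr_x A x b : is_group_table A -> rr A x (A x b) = rr A x b.
Proof. intros HA. unfold rr. rewrite orb_x; auto. Qed.

Lemma rr_spec A x b : is_group_table A -> orb A x b (rr A x b).
Proof. intros HA. unfold rr. apply eps_spec. exists b. exists 0%Z. rewrite zp_0, gidl; auto. Qed.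

Lemma ii_spec A x b : is_group_table A -> A (zp A x (ii A x b)) (rr A x b) = b.
Proof.
  intros HA. unfold ii. apply (eps_spec 0%Z (fun n => A (zp A x n) (rr A x b) = b)).
  destruct (rr_spec A x b HA) as [n Hn]. exists (- n)%Z. rewrite Hn, <- gassoc, zp_opp, gidl; auto.
Qed.

Lemma ii_key A x b : is_group_table A -> zp A x (ii A x (A x b)) = zp A x (ii A x b + 1).
Proof.
  intros HA. apply (gcancel_r A (rr A x b)); auto. transitivity (A x b).
  - rewrite <- (rr_x A x b HA). apply ii_spec; auto.
  - symmetry. rewrite zp_succ, gassoc, ii_spec; auto.
Qed.

Lemma zp_sub A x a c : is_group_table A -> zp A x a = zp A x c -> zp A x (a - c) = 0.
Proof.
  intros HA H. apply (gcancel_r A (zp A x c)); auto. rewrite <- zp_add, gidl; auto.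
  replace (a - c + c)%Z with a by lia. auto.
Qed.

Lemma zp_neg0 A x n : is_group_table A -> zp A x n = 0 -> zp A x (- n) = 0.
Proof. intros HA H. rewrite <- (gidr A (zp A x (- n))), <- H, zp_opp; auto. Qed.

Lemma zp_zero_inf A x n : is_group_table A -> (forall k, 1 <= k -> pow A x k <> 0) ->
  zp A x n = 0 -> n = 0%Z.
Proof.
  intros HA Hinf H. destruct (Z.lt_trichotomy n 0) as [h|[h|h]]; auto; exfalso.
  - apply zp_neg0 in H; auto. replace (- n)%Z with (Z.of_nat (Z.to_nat (- n))) in H by lia.
    rewrite zp_nat in H. apply (Hinf (Z.to_nat (- n))); auto. lia.
  - replace n with (Z.of_nat (Z.to_nat n)) in H by lia.
    rewrite zp_nat in H. apply (Hinf (Z.to_nat n)); auto. lia.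
Qed.

Lemma ii_inf A x b : is_group_table A -> (forall k, 1 <= k -> pow A x k <> 0) ->
  ii A x (A x b) = (ii A x b + 1)%Z.
Proof.
  intros HA Hinf. pose proof (zp_zero_inf A x _ HA Hinf (zp_sub A x _ _ HA (ii_key A x b HA))). lia.
Qed.

Lemma zp_mult A x m q : is_group_table A -> pow A x m = 0 -> zp A x (Z.of_nat m * q) = 0.
Proof.
  intros HA Hm. induction q using Z.peano_ind.
  - rewrite Z.mul_0_r. apply zp_0.
  - replace (Z.of_nat m * Z.succ q)%Z with (Z.of_nat m * q + Z.of_nat m)%Z by lia.
    rewrite zp_add, IHq, zp_nat, Hm, gidl; auto.
  - replace (Z.of_nat m * Z.pred q)%Z with (Z.of_nat m * q + - Z.of_nat m)%Z by lia.
    rewrite zp_add, IHq, gidl, zp_neg0; auto. rewrite zp_nat; auto.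
Qed.

Lemma zp_zero_fin A x m n : is_group_table A -> 1 <= m -> pow A x m = 0 ->
  (forall k, k < m -> ~ (1 <= k /\ pow A x k = 0)) ->
  zp A x n = 0 -> (n mod Z.of_nat m = 0)%Z.
Proof.
  intros HA Hm1 Hm2 Hmin H.
  assert (HM : (Z.of_nat m <> 0)%Z) by lia.
  pose proof (Z.div_mod n (Z.of_nat m) HM) as Hd.
  pose proof (Z.mod_pos_bound n (Z.of_nat m) ltac:(lia)) as Hb.
  rewrite Hd, zp_add, zp_mult, gidl in H; auto.
  replace (n mod Z.of_nat m)%Z with (Z.of_nat (Z.to_nat (n mod Z.of_nat m))) in H by lia.
  rewrite zp_nat in H. apply NNPP. intros C. apply (Hmin (Z.to_nat (n mod Z.of_nat m))). lia.
  split; auto. lia.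
Qed.

Lemma ii_fin A x m b : is_group_table A -> 1 <= m -> pow A x m = 0 ->
  (forall k, k < m -> ~ (1 <= k /\ pow A x k = 0)) ->
  (ii A x (A x b) mod Z.of_nat m = (ii A x b + 1) mod Z.of_nat m)%Z.
Proof.
  intros HA Hm1 Hm2 Hmin.
  pose proof (zp_zero_fin A x m _ HA Hm1 Hm2 Hmin (zp_sub A x _ _ HA (ii_key A x b HA))) as H.
  set (d := (ii A x (A x b) - (ii A x b + 1))%Z) in *.
  assert (HM : (Z.of_nat m <> 0)%Z) by lia.
  pose proof (Z.div_mod d (Z.of_nat m) HM) as Hd. rewrite H, Z.add_0_r in Hd.
  replace (ii A x (A x b)) with (ii A x b + 1 + d / Z.of_nat m * Z.of_nat m)%Z by lia.
  apply Z_mod_plus_full.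
Qed.

Fixpoint sumZ (f : nat -> Z) (K : nat) : Z := match K with 0 => 0%Z | S K' => (sumZ f K' + f K')%Z end.

Lemma sumZ_ext f1 f2 K : (forall j, j < K -> f1 j = f2 j) -> sumZ f1 K = sumZ f2 K.
Proof. induction K; simpl; intros H; auto. rewrite IHK, H; auto. Qed.

Lemma sumZ_shift f K : sumZ (fun j => f (S j)) K = (sumZ f K - f O + f K)%Z.
Proof. induction K; simpl; lia. Qed.

Lemma rotation (g : Z -> Z) (M : Z) T : (0 < M)%Z ->
  sumZ (fun j => g ((T + Z.of_nat j) mod M)%Z) (Z.to_nat M) = sumZ (fun j => g (Z.of_nat j)) (Z.to_nat M).
Proof.
  intros HM.
  set (R := fun T => sumZ (fun j => g ((T + Z.of_nat j) mod M)%Z) (Z.to_nat M)).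
  assert (Hstep : forall T, R (T + 1)%Z = R T).
  { intros T0. unfold R.
    transitivity (sumZ (fun j => (fun j => g ((T0 + Z.of_nat j) mod M)%Z) (S j)) (Z.to_nat M)).
    { apply sumZ_ext. intros j _. cbv beta. f_equal. f_equal. lia. }
    rewrite (sumZ_shift (fun j => g ((T0 + Z.of_nat j) mod M)%Z)). cbv beta.
    assert (E : ((T0 + Z.of_nat (Z.to_nat M)) mod M = (T0 + Z.of_nat 0) mod M)%Z).
    { replace (T0 + Z.of_nat (Z.to_nat M))%Z with (T0 + 1 * M)%Z by lia.
      rewrite Z_mod_plus_full. f_equal. lia. }
    rewrite E. lia. }
  assert (HR : forall T, R T = R 0%Z).
  { intros T0. induction T0 using Z.peano_ind; auto.
    - rewrite <- Z.add_1_r, Hstep; auto.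
    - rewrite <- IHT0. rewrite <- (Hstep (Z.pred T0)). f_equal. lia. }
  change (R T = sumZ (fun j => g (Z.of_nat j)) (Z.to_nat M)). rewrite HR. unfold R.
  apply sumZ_ext. intros j Hj. f_equal. rewrite Z.add_0_l. apply Z.mod_small. lia.
Qed.
Lemma x_xinv A x b : is_group_table A -> A x (A (ginv A x) b) = b.
Proof. intros HA. rewrite <- gassoc, (proj1 (ginv_spec A x HA)), gidl; auto. Qed.

Lemma comm_in_N A HA E x h : In (Dd h) E ->
  NCY (gensOf (rho A HA) E) (rho A HA x) (Dd (fun b => h b - h (A (ginv A x) b))%Z).
Proof.
  intros H. rewrite <- (comm_formula A HA x h). apply ncy_mul. apply ncy_conj. constructor. apply Gen_E; auto.
  apply ncy_inv. constructor.
Qed.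

Definition Ef (r : Z) : Z := if Z.eqb r 0 then 1%Z else if Z.eqb r 1 then 1%Z else 0%Z.

Lemma Ef_sum K : sumZ (fun j => Ef (Z.of_nat j)) (K + 2) = 2%Z.
Proof.
  induction K. reflexivity.
  replace (S K + 2) with (S (K + 2)) by lia. simpl sumZ. rewrite IHK.
  unfold Ef. destruct (Z.eqb_spec (Z.of_nat (K + 2)) 0); try lia.
  destruct (Z.eqb_spec (Z.of_nat (K + 2)) 1); lia.
Qed.

Lemma sigma2 A HA x : x <> 0 ->
  exists E, NCY (gensOf (rho A HA) E) (rho A HA x) (Dd (fun _ => 2%Z)).
Proof.
  intros Hx.
  destruct (classic (exists k, 1 <= k /\ pow A x k = 0)) as [Hfin|Hinf].
  2:{ assert (Hinf' : forall k, 1 <= k -> pow A x k <> 0) by (intros k Hk E; apply Hinf; eauto).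
      exists [Dd (ii A x)].
      assert (H1 : NCY (gensOf (rho A HA) [Dd (ii A x)]) (rho A HA x) (Dd (fun _ => 1%Z))).
      { replace (Dd (fun _ => 1%Z)) with (Dd (fun b => ii A x b - ii A x (A (ginv A x) b))%Z).
        apply comm_in_N. left; auto.
        apply Dd_ext. intros b. rewrite <- (x_xinv A x b HA) at 1. rewrite ii_inf; auto. lia. }
      replace (Dd (fun _ => 2%Z)) with (pcomp (Dd (fun _ => 1%Z)) (Dd (fun _ => 1%Z))).
      apply ncy_mul; exact H1.
      rewrite Dd_comp. apply Dd_ext. intros b. lia. }
  destruct (exists_least _ Hfin) as [m [[Hm1 Hm2] Hmin]].
  assert (Hm : 2 <= m).
  { destruct (Nat.eq_dec m 1); try lia. subst. simpl in Hm2. rewrite gidr in Hm2; auto. contradiction. }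
  set (M := Z.of_nat m).
  set (t := fun c => (ii A x c mod M)%Z).
  set (h := fun c => if Z.eqb (t c) 0 then 1%Z else 0%Z).
  set (sgn := fun c => Z.eqb (t c) 1).
  set (e := fun c => Ef (t c)).
  exists [Dd h; kap sgn].
  set (G := gensOf (rho A HA) [Dd h; kap sgn]).
  assert (HX2 : NCY G (rho A HA x) (Dd e)).
  { replace (Dd e) with (Dd (fun b => if sgn b then - (h b - h (A (ginv A x) b)) else (h b - h (A (ginv A x) b)))%Z).
    rewrite <- kap_conj. apply ncy_conj. apply comm_in_N. left; auto.
    apply Gen_E. right; left; auto.
    apply Dd_ext. intros b.
    set (s := t (A (ginv A x) b)).
    assert (Hs : (0 <= s < M)%Z) by (apply Z.mod_pos_bound; lia).
    assert (Ht : t b = ((s + 1) mod M)%Z).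
    { unfold s, t, M. rewrite Z.add_mod_idemp_l by lia. rewrite <- ii_fin; auto.
      rewrite x_xinv; auto. }
    assert (Ht' : t b = if Z.eqb (s + 1) M then 0%Z else (s + 1)%Z).
    { rewrite Ht. destruct (Z.eqb_spec (s + 1) M).
      - rewrite e0. apply Z_mod_same_full.
      - apply Z.mod_small. lia. }
    unfold e, sgn, h, Ef. fold s. rewrite Ht'.
    destruct (Z.eqb_spec (s + 1) M); destruct (Z.eqb_spec s 0);
    repeat (match goal with |- context [Z.eqb ?a ?b] => destruct (Z.eqb_spec a b) end); lia. }
  assert (HC : forall j, NCY G (rho A HA x) (Dd (fun b => e (A (pow A x j) b)))).
  { intros j. rewrite <- (rho_conj A HA (pow A x j) e). apply ncy_conj; auto. apply gen_inv. apply Gen_phi. }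
  assert (HP : forall J, NCY G (rho A HA x) (Dd (fun b => sumZ (fun j => e (A (pow A x j) b)) J))).
  { induction J.
    - simpl. rewrite Dd_0. constructor.
    - simpl. rewrite <- Dd_comp. apply ncy_mul; auto. }
  assert (Hsum : forall b, sumZ (fun j => e (A (pow A x j) b)) m = 2%Z).
  { intros b.
    assert (Hj : forall j, t (A (pow A x j) b) = ((ii A x b + Z.of_nat j) mod M)%Z).
    { induction j.
      - simpl. rewrite gidl; auto. unfold t. f_equal. lia.
      - simpl pow. rewrite gassoc; auto. unfold t in *. change M with (Z.of_nat m) in *. rewrite ii_fin; auto.
        rewrite <- Z.add_mod_idemp_l by lia. rewrite IHj.
        rewrite Z.add_mod_idemp_l by lia. f_equal. lia. }
    rewrite (sumZ_ext _ (fun j => Ef ((ii A x b + Z.of_nat j) mod M)%Z)).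
    2:{ intros j _. unfold e. rewrite Hj. auto. }
    replace m with (Z.to_nat M) by (unfold M; lia).
    rewrite (rotation Ef M) by lia. replace (Z.to_nat M) with ((m - 2) + 2) by (unfold M; lia).
    apply Ef_sum. }
  replace (Dd (fun _ => 2%Z)) with (Dd (fun b => sumZ (fun j => e (A (pow A x j) b)) m)).
  apply (HP m). apply Dd_ext. intros b. rewrite Hsum. auto.
Qed.

Lemma SM_dense x y : dense_in_G (SMc x y).
Proof.
  apply dense_of. intros A0 n HA.
  destruct (Nat.eq_dec x 0) as [Hx|Hx].
  { exists A0. split; auto. split. intros i j _ _. auto. left; auto. }
  destruct (sigma2 A0 HA x Hx) as [E HE].
  set (E' := E ++ [qp A0 HA y]).
  assert (HN : NCY (gensOf (rho A0 HA) E') (rho A0 HA x) (rho A0 HA y)).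
  { rewrite <- (final_formula A0 HA y). apply ncy_mul. apply ncy_conj. apply NCY_mono; auto.
    apply Gen_E. apply in_or_app. right. left. auto.
    apply ncy_inv. apply NCY_mono; auto. }
  destruct (realize A0 (rho A0 HA) E' n [0; x; y] (rho_hom A0 HA) (rho_inj A0 HA) (rho_0 A0 HA))
    as [B [beta [HB [Hag [Hhom [Hinj [Hs [HG HF]]]]]]]].
  exists B. split; auto. split; auto. right.
  apply (NCY_transfer (gensOf (rho A0 HA) E') (rho A0 HA x) (rho A0 HA y) B beta x); auto.
  - rewrite HF. apply rho_0. left; auto.
  - apply HF. right; left; auto.
  - apply Gen_phi.
  - apply HF. right; right; left; auto.
Qed.

Definition Dfam (k : nat) : table -> Prop :=
  match k mod 3 with
  | 0 => NFc (decl (k / 3))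
  | 1 => BSc
  | _ => SMc (nth 0 (decl (k / 3)) 0) (nth 1 (decl (k / 3)) 0)
  end.

Theorem corollary6p3 :
  comeager_in_G
    (fun A => simple_group A /\ ~ finitely_generated A /\ ~ locally_finite A).
Proof.
  exists Dfam. split; [|split].
  - intros k. exists (Dfam k). split; [|tauto]. unfold Dfam.
    destruct (k mod 3) as [|[|]]; auto using NFc_open, BSc_open, SMc_open.
  - intros k. unfold Dfam. destruct (k mod 3) as [|[|]]; auto using NF_dense, BS_dense, SM_dense.
  - intros A HA HD. split; [|split].
    + apply SM_impl; auto. intros x y. destruct (decl_surj [x; y]) as [c Hc].
      pose proof (HD (3 * c + 2)) as H. unfold Dfam in H.
      replace ((3 * c + 2) mod 3) with 2 in H by (rewrite Nat.add_comm, Nat.mul_comm, Nat.Div0.mod_add; auto).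
      replace ((3 * c + 2) / 3) with c in H by (rewrite Nat.add_comm, Nat.mul_comm, Nat.div_add; auto).
      rewrite Hc in H. exact H.
    + intros [s Hs]. destruct (decl_surj s) as [c Hc].
      pose proof (HD (3 * c)) as H. unfold Dfam in H.
      replace ((3 * c) mod 3) with 0 in H by (rewrite Nat.mul_comm, Nat.Div0.mod_mul; auto).
      replace ((3 * c) / 3) with c in H by (rewrite Nat.mul_comm, Nat.div_mul; auto).
      rewrite Hc in H. exact (NF_impl s A HA H Hs).
    + apply BS_impl; auto. pose proof (HD 1) as H. exact H.
Qed.
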